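(* Let $n\ge 3$, let $d_1,\dots,d_{n-1}>0$, and let $k_1,\dots,k_{n-1}$ be real gains with $k_1+1>k_2$, $k_i>k_{i+1}$ for $i=2,\ldots,n-2$, and $k_{n-1}>0$. Define $f:\mathbb{R}^{n-1}\to\mathbb{R}^{n-1}$, writing $s_i(z)=\mathrm{sgn}(z_i)\,\mathrm{sgn}(|z_i|-d_i)$, by $$f_1(z)=-(k_1+1)s_1(z)+k_2 s_2(z),$$ $$f_i(z)=s_{i-1}(z)-(k_i+1)s_i(z)+k_{i+1}s_{i+1}(z),\quad i=2,\ldots,n-2,$$ $$f_{n-1}(z)=s_{n-2}(z)-(k_{n-1}+1)s_{n-1}(z).$$ Let $i\in\{2,\ldots,n-2\}$ and $z\in\mathbb{R}^{n-1}$. If $|z_j|\,\big||z_j|-d_j\big|=0$ for $j=1,\ldots,i-1$ and $\mathbf{0}\in\mathcal{K}(f(z))$, then $|z_i|\,\big||z_i|-d_i\big|=0$.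
   Context: The sign function is $\mathrm{sgn}(z)=+1$ if $z\ge 0$ and $\mathrm{sgn}(z)=-1$ if $z<0$. For a (possibly discontinuous) vector field $f$, $\mathcal{K}(f(z))=\bigcap_{\delta>0}\overline{\mathrm{co}}\,(f(B(z,\delta)))$, where $\overline{\mathrm{co}}$ denotes the closed convex hull and $B(z,\delta)$ the open ball of radius $\delta$ centered at $z$. *)

(* Defs.v *)
From HB Require Import structures.
From mathcomp Require Import all_boot all_order all_algebra.
From mathcomp Require Import all_classical all_reals all_analysis.
Set Implicit Arguments. Unset Strict Implicit. Unset Printing Implicit Defensive.
Import Order.TTheory GRing.Theory Num.Theory.
Import numFieldNormedType.Exports.
Local Open Scope classical_set_scope.
Local Open Scope ring_scope.

Definition sgn {R : realType} (x : R) : R := if 0 <= x then 1 else -1.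

Definition conv_hull {R : realType} (m : nat) (A : set 'rV[R]_m) : set 'rV[R]_m :=
  [set x | exists (p : nat) (w : 'I_p -> R) (a : 'I_p -> 'rV[R]_m),
     (forall i, 0 <= w i) /\ \sum_(i < p) w i = 1 /\ (forall i, A (a i)) /\
     x = \sum_(i < p) w i *: a i].

Definition cl_conv_hull {R : realType} (m : nat) (A : set 'rV[R]_m) : set 'rV[R]_m :=
  closure (conv_hull A).

Definition eball {R : realType} (m : nat) (z : 'rV[R]_m) (delta : R) : set 'rV[R]_m :=
  [set y | \sum_(i < m) (y ord0 i - z ord0 i) ^+ 2 < delta ^+ 2].

Definition Filippov {R : realType} (m : nat) (f : 'rV[R]_m -> 'rV[R]_m)
  (z : 'rV[R]_m) : set 'rV[R]_m :=
  \bigcap_(delta in [set delta : R | 0 < delta]) cl_conv_hull (f @` eball z delta).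

(* 1-based coordinate z_j of z in R^m (j = 1..m); 0 outside the range *)
Definition coord1 {R : realType} (m : nat) (z : 'rV[R]_m) (j : nat) : R :=
  if (0 < j)%N then
    (if @insub nat (fun k => (k < m)%N) 'I_m j.-1 is Some i then z ord0 i else 0)
  else 0.

Definition s_fun {R : realType} (m : nat) (d : nat -> R) (z : 'rV[R]_m) (j : nat) : R :=
  sgn (coord1 z j) * sgn (`|coord1 z j| - d j).

Definition f_comp {R : realType} (m : nat) (d k : nat -> R) (z : 'rV[R]_m) (j : nat) : R :=
  (if (1 < j)%N then s_fun d z j.-1 else 0)
  - (k j + 1) * s_fun d z j
  + (if (j < m)%N then k j.+1 * s_fun d z j.+1 else 0).

Definition f_vec {R : realType} (m : nat) (d k : nat -> R) (z : 'rV[R]_m) : 'rV[R]_m :=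
  \row_(i < m) f_comp d k z i.+1.

(* Main.v *)
Require Import Defs.
From HB Require Import structures.
From mathcomp Require Import all_boot all_order all_algebra.
From mathcomp Require Import all_classical all_reals all_analysis.
From mathcomp Require Import ring lra zify.
Import Order.TTheory GRing.Theory Num.Theory.
Import numFieldNormedType.Exports.
Local Open Scope classical_set_scope.
Local Open Scope ring_scope.

Section Aux.
Variable R : realType.
Variable m : nat.
Variables d k : nat -> R.

Lemma coord1E (v : 'rV[R]_m) j (Hj : (j.-1 < m)%N) : (0 < j)%N ->
  coord1 v j = v ord0 (Ordinal Hj).
Proof.
move=> j0; rewrite /coord1 j0; case: insubP => [i _ Hi|]; last by rewrite Hj.
by congr (v ord0 _); apply: val_inj.
Qed.

Lemma coord1_lin (a b : 'rV[R]_m) (c : R) j :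
  coord1 (c *: a + b) j = c * coord1 a j + coord1 b j.
Proof.
rewrite /coord1; case: (0 < j)%N; last by rewrite mulr0 addr0.
by case: insub => [i|]; rewrite ?mxE ?mulr0 ?addr0.
Qed.

Lemma coord10 j : coord1 (0 : 'rV[R]_m) j = 0.
Proof. by rewrite /coord1; case: (0 < j)%N => //; case: insub => [i|]; rewrite ?mxE. Qed.

Lemma coord1_cont j : continuous (fun v : 'rV[R]_m => coord1 v j).
Proof.
rewrite /coord1; case: (0 < j)%N; last exact: cst_continuous.
case: insub => [i|]; last exact: cst_continuous.
exact: coord_continuous.
Qed.

Lemma coord1_f (y : 'rV[R]_m) j : (1 <= j <= m)%N ->
  coord1 (f_vec d k y) j = f_comp d k y j.
Proof.
case/andP=> j1 jm; have Hj : (j.-1 < m)%N by case: j j1 jm.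
by rewrite (coord1E _ _ Hj) // /f_vec mxE /=; case: j j1 {jm Hj}.
Qed.

Fixpoint pp (j : nat) : R := match j with 0 => 0
  | j'.+1 => k j'.+1 + 1 - k j'.+1 / pp j' end.

Fixpoint EE (v : 'rV[R]_m) (j : nat) : R := match j with 0 => 0
  | j'.+1 => coord1 v j'.+1 + EE v j' / pp j' end.

Lemma EE_lin (a b : 'rV[R]_m) (c : R) j :
  EE (c *: a + b) j = c * EE a j + EE b j.
Proof.
elim: j => [|j IH] /=; first by rewrite mulr0 addr0.
rewrite coord1_lin IH; ring.
Qed.

Lemma EE0 j : EE 0 j = 0.
Proof. by elim: j => [|j IH] //=; rewrite coord10 IH mul0r addr0. Qed.

Lemma EE_sum p (w : 'I_p -> R) (a : 'I_p -> 'rV[R]_m) j :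
  EE (\sum_(l < p) w l *: a l) j = \sum_(l < p) w l * EE (a l) j.
Proof.
elim: p w a => [|p IH] w a; first by rewrite !big_ord0 EE0.
by rewrite !big_ord_recr /= addrC EE_lin IH addrC.
Qed.

Lemma EE_cont j : continuous (fun v : 'rV[R]_m => EE v j).
Proof.
elim: j => [|j IH] /=; first exact: cst_continuous.
move=> x.
have -> : (fun v : 'rV[R]_m => coord1 v j.+1 + EE v j / pp j) =
  ((fun v => coord1 v j.+1) + ((fun v => EE v j) \* (fun=> (pp j)^-1)))%R.
  by apply: funext => v.
apply: continuousD; first exact: coord1_cont.
by apply: continuousM; [exact: IH| exact: cst_continuous].
Qed.

End Aux.
Arguments pp {R}. Arguments EE {R m}.
Arguments coord1E {R m}. Arguments coord1_f {R m}.

Section Aux2.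
Variable R : realType.
Variable m : nat.
Variables d k : nat -> R.

Lemma sgnE (x : R) : sgn x = 1 \/ sgn x = -1.
Proof. by rewrite /sgn; case: (0 <= x); [left|right]. Qed.

Lemma s_funE (y : 'rV[R]_m) j : s_fun d y j = 1 \/ s_fun d y j = -1.
Proof.
rewrite /s_fun; case: (sgnE (coord1 y j)) => ->; case: (sgnE (`|coord1 y j| - d j)) => ->;
  rewrite ?mul1r ?mulN1r ?opprK; by [left|right].
Qed.

Lemma EE_S (v : 'rV[R]_m) j : EE k v j.+1 = coord1 v j.+1 + EE k v j / pp k j.
Proof. by []. Qed.
Lemma pp_S j : pp k j.+1 = k j.+1 + 1 - k j.+1 / pp k j.
Proof. by []. Qed.

Lemma EE_f (y : 'rV[R]_m) j : (1 <= j)%N -> (j < m)%N ->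
  (forall l, (1 <= l < j)%N -> pp k l != 0) ->
  EE k (f_vec d k y) j = - pp k j * s_fun d y j + k j.+1 * s_fun d y j.+1.
Proof.
elim: j => [//|j IH] _ jm Hp; rewrite EE_S pp_S.
rewrite coord1_f; last by rewrite /= ltnW.
rewrite /f_comp jm.
case: j IH jm Hp => [|j] IH jm Hp.
  rewrite /= invr0 !mulr0 subr0 addr0 sub0r; ring.
rewrite IH // ; last by move=> l /andP[l1 lj]; apply: Hp; rewrite l1 ltnS ltnW.
have Hj : pp k j.+1 != 0 by apply: Hp; rewrite ltnSn.
move: Hj; generalize (pp k j.+1) => p Hp0 /=; field. by []. by apply: (ltn_trans _ jm).
Qed.

Lemma sgn_near (a b : R) : a != 0 -> `|b - a| < `|a| -> sgn b = sgn a.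
Proof.
move=> a0; rewrite ltr_norml /sgn.
case: (ltrgtP 0 a) => Ha; last by rewrite Ha eqxx in a0.
- rewrite gtr0_norm // => /andP[H1 H2].
  have -> : 0 <= b by lra.
  by [].
- rewrite ltr0_norm // => /andP[H1 H2].
  have -> : (0 <= b) = false by apply/negbTE; rewrite -ltNge; lra.
  by [].
Qed.


Lemma abs_lt_sq (a e : R) : 0 < e -> a ^+ 2 < e ^+ 2 -> `|a| < e.
Proof.
move=> e0 h; case: (lerP 0 a) => ha.
- rewrite ger0_norm //; nra.
- rewrite ltr0_norm //; nra.
Qed.

Lemma ball_coord (y z : 'rV[R]_m) e io : 0 < e -> eball z e y -> `|y ord0 io - z ord0 io| < e.
Proof.
move=> e0; rewrite /eball /= (bigD1 io) //= => h.
apply: abs_lt_sq => //; apply: le_lt_trans h.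
rewrite lerDl; apply: sumr_ge0 => l _; exact: sqr_ge0.
Qed.

End Aux2.
Arguments s_funE {R m}. Arguments EE_f {R m}. Arguments sgn_near {R}. Arguments ball_coord {R m y z e}.
Arguments EE_S {R m}. Arguments pp_S {R}.

Theorem lemma1 (R : realType) (n : nat) (d k : nat -> R) :
  (3 <= n)%N ->
  (forall j, (1 <= j <= n.-1)%N -> 0 < d j) ->
  k 2%N < k 1%N + 1 ->
  (forall i, (2 <= i <= n - 2)%N -> k i.+1 < k i) ->
  0 < k n.-1 ->
  forall (i : nat), (2 <= i <= n - 2)%N ->
  forall (z : 'rV[R]_n.-1),
    (forall j, (1 <= j <= i.-1)%N -> `|coord1 z j| * `| `|coord1 z j| - d j | = 0) ->
    Filippov (f_vec d k) z 0 ->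
    `|coord1 z i| * `| `|coord1 z i| - d i | = 0.
Proof.
move=> n3 Hd Hk12 Hkdec Hkn i /andP[i2 in2] z _ Hfil.
have kpos : forall j, (2 <= j <= n.-1)%N -> 0 < k j.
  suff H : forall t, (2 <= n.-1 - t)%N -> 0 < k (n.-1 - t)%N.
    move=> j /andP[j2 jn]; have e : (n.-1 - (n.-1 - j) = j)%N by lia.
    have := H (n.-1 - j)%N; rewrite e; apply; lia.
  elim => [|t IH] ht; first by rewrite subn0.
  have e1 : ((n.-1 - t.+1).+1 = n.-1 - t)%N by lia.
  have := Hkdec (n.-1 - t.+1)%N; rewrite e1 => h.
  have h1 : (2 <= n.-1 - t.+1 <= n - 2)%N by apply/andP; split; lia.
  have h2 : (2 <= n.-1 - t)%N by lia.
  have := IH h2; have := h h1; lra.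
have ppb : forall j, (1 <= j <= i)%N -> k j.+1 < pp k j.
  elim => [//|j IH] /andP[_ ji].
  case: j IH ji => [|j] IH ji.
    by rewrite pp_S /= invr0 mulr0 subr0.
  have kp : 0 < k j.+2 by apply: kpos; apply/andP; split; lia.
  have IH' := IH ltac:(apply/andP; split; lia).
  have pp0 : 0 < pp k j.+1 by lra.
  have hq : k j.+2 / pp k j.+1 < 1 by rewrite ltr_pdivrMr // mul1r.
  have := Hkdec j.+2 ltac:(apply/andP; split; lia).
  rewrite pp_S; lra.
apply/eqP; apply/negPn/negP; rewrite mulf_eq0 negb_or !normr_eq0 => /andP[zi0 zid0].
have Hio : (i.-1 < n.-1)%N by lia.
have i0 : (0 < i)%N by lia.
set io := Ordinal Hio.
have ez := coord1E z i Hio i0.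
rewrite ez in zi0 zid0.
set delta := Num.min `|z ord0 io| `| `|z ord0 io| - d i|.
have dpos : 0 < delta by rewrite lt_min !normr_gt0 zi0 zid0.
set sg := s_fun d z i.
set c := pp k i - k i.+1.
have cpos : 0 < c by rewrite /c subr_gt0; apply: ppb; apply/andP; split; lia.
have kip : 0 < k i.+1 by apply: kpos; apply/andP; split; lia.
have key : forall y, eball z delta y -> sg * EE k (f_vec d k y) i <= - c.
  move=> y hy.
  have hyz := ball_coord io dpos hy.
  have sy : s_fun d y i = sg.
    rewrite /sg /s_fun ez (coord1E y i Hio i0).
    have hb1 : `|y ord0 io - z ord0 io| < `|z ord0 io|.
      by apply: lt_le_trans hyz _; rewrite ge_min lexx.
    have hb2 : `| (`|y ord0 io| - d i) - (`|z ord0 io| - d i)| < `| `|z ord0 io| - d i|.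
      rewrite opprB addrA subrK.
      apply: le_lt_trans (ler_dist_dist _ _) _.
      by apply: lt_le_trans hyz _; rewrite ge_min lexx orbT.
    by rewrite (sgn_near _ _ zi0 hb1) (sgn_near _ _ zid0 hb2).
  rewrite EE_f //; last first.
  - move=> l /andP[l1 li].
    have := ppb l ltac:(apply/andP; split; lia).
    have := kpos l.+1 ltac:(apply/andP; split; lia).
    move=> h1 h2; apply/eqP => h3; rewrite h3 in h2; lra.
  - lia.
  rewrite sy /c.
  case: (s_funE d y i.+1) => ->; case: (s_funE d z i); rewrite -/sg => ->; lra.
have Hcl : closure (conv_hull (f_vec d k @` eball z delta)) 0 := Hfil delta dpos.
pose g := fun v : 'rV[R]_n.-1 => sg * EE k v i.
have gc : continuous g.
  move=> x; have -> : g = (fun=> sg) \* (fun v => EE k v i) by [].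
  by apply: continuousM; [exact: cst_continuous | exact: EE_cont].
have hn := gc 0 _ (nbhsx_ballx (g 0) c cpos).
case: (Hcl _ hn) => x [[p [w [a [w0 [w1 [Ha ->]]]]]] hb].
have g0 : g 0 = 0 by rewrite /g EE0 mulr0.
move: hb; rewrite /= g0 /ball /= sub0r normrN ltr_norml => /andP[hb _].
have : g (\sum_(l < p) w l *: a l) <= - c.
  rewrite /g EE_sum mulr_sumr.
  apply: (@le_trans _ _ (\sum_(l < p) w l * - c)); last first.
    by rewrite -mulr_suml w1 mul1r.
  apply: ler_sum => l _.
  case: (Ha l) => y hy <-.
  rewrite mulrCA; apply: ler_wpM2l => //; exact: key.
lra.
Qed.
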